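(* Given the stochastic system, a PRTL formula $\varphi$, and a prior belief state $b_0\sim\mathcal N(\hat x_{init},\Sigma_{init})$ (as in the context), Algorithm idPRTL finds a path $\rho_H$ only if $\rho_H\models\varphi$.
   Context: System: $x_{k+1}=Ax_k+Bu_k+\sqrt W\xi$, $y_k=Cx_k+\sqrt{V_k}\xi$, $\xi\sim\mathcal N(0,I_n)$, $x\in\mathbb R^n$, $u\in U=\{H_uu\ge c_u\}$ a full-dimensional polytope, $(A,B)$ stabilisable, $W\succeq0$, $V_k\succeq0$ possibly state dependent. Beliefs $b_k\sim\mathcal N(\hat x_k,\Sigma_k)$; a path is the belief sequence $\rho=b_0b_1\dots$; planning uses the MLO belief dynamics $\hat x_{k+1}=A\hat x_k+Bu_k$, $\Sigma_{k+1}=\bar\Sigma_k-K_kC\bar\Sigma_k$, $\bar\Sigma_k=A\Sigma_kA^\top+W$, $K_k=\bar\Sigma_kC^\top(C\bar\Sigma_kC^\top+V_k)^{-1}$. PRTL: $\varphi::=\pi\mid\neg\pi\mid\varphi_1\wedge\varphi_2\mid\varphi_1\vee\varphi_2\mid\varphi_1\mathcal U\varphi_2\mid\varphi_1\mathcal R\varphi_2$, predicates $\pi$ given by tolerance $\epsilon\in[0,1]$ and $g(x)=c-a^\top x$; $\rho\models_k\pi$ iff $P(g(x_k)\ge0)>1-\epsilon$ (equivalently $a^\top\hat x_k-\Phi^{-1}(\epsilon)\|\sqrt{\Sigma_k}a\|_2<c$), $\rho\models_k\neg\pi$ iff $P(-g(x_k)\ge0)>1-\epsilon$; Boolean connectives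 as usual; $\rho\models_k\varphi_1\mathcal U\varphi_2$ iff $\exists k'\ge k$, $\rho\models_{k'}\varphi_2$ and $\rho\models_{k''}\varphi_1$ for all $k\le k''\le k'$; $\rho\models_k\varphi_1\mathcal R\varphi_2$ iff ($\exists k'\ge k$ with $\rho\models_{k'}\varphi_1$ and $\rho\models_{k''}\varphi_2$ for all $k\le k''\le k'$) or $\rho\models_{k'}\varphi_2$ for all $k'\ge k$; $\rho\models\varphi$ iff $\rho\models_0\varphi$. Abstraction $M_\varphi$: a finite Kripke structure whose states are convex regions $\mathcal P_i$ of belief space (each the set of beliefs satisfying a subset of the predicates), labeled by the state subformulas of $\varphi$ valid on the whole region, with initial state the abstraction of $b_0$ and transitions between regions whose bounding polytopes (possibly enlarged by neighbouring regions with the same label) intersect; $\tilde\varphi$ is $\varphi$ with its state subformulas replaced by atomic propositions. Algorithm idPRTL: build $M_\varphi$ and $\tilde\varphi$; while bounded model checking (BMC) finds a discrete path $\mathbb P_K=\mathcal P_0\dots\mathcal P_{L-1}(\mathcal P_L\dots\mathcal P_K)^\omega$ of $M_\varphi$ satisfying $\tilde\varphi$: run the sampling-based feasibility search fSearch on $\mathbb P_K$, which searches (by propagating only valid segments of the MLO dynamics) for a belief path starting at $b_0$ that satisfies, at each instant $k$, the convex constraints of the region $\mathcal P_{\mathbb I(k)}$ of $\mathbb P_K$ ($\mathbb I$ increasing index function), with loop-closing conditions $\hat x_H=\hat x_{\mathbb I(L)}$, $\Sigma_H\le\Sigma_{\mathbb I(L)}$ if $L\le K$; if feasible, return the path and inputs;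 otherwise replace $M_\varphi$ by its product with the complement of $\mathbb P_K$. If BMC finds no path, return infeasible. *)

(* Defs.v *)
From HB Require Import structures.
From mathcomp Require Import all_boot all_order all_algebra.
From mathcomp Require Import all_classical all_reals all_analysis.
From Stdlib Require List.

Set Implicit Arguments.
Unset Strict Implicit.
Unset Printing Implicit Defensive.

Import Order.TTheory GRing.Theory Num.Theory.
Import numFieldNormedType.Exports.
Local Open Scope classical_set_scope.
Local Open Scope ring_scope.

Definition psd {R : realType} {n : nat} (M : 'M[R]_n) : Prop :=
  M^T = M /\ forall v : 'cV[R]_n, 0 <= (v^T *m M *m v) 0 0.

Definition loewner_le {R : realType} {n : nat} (S1 S2 : 'M[R]_n) : Prop :=
  psd (S2 - S1).

Definition inU {R : realType} {m r : nat} (Hu : 'M[R]_(r, m)) (cu : 'cV[R]_r)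
  (u : 'cV[R]_m) : Prop := forall i, cu i 0 <= (Hu *m u) i 0.

Definition full_dim_polytope {R : realType} {m r : nat}
  (Hu : 'M[R]_(r, m)) (cu : 'cV[R]_r) : Prop :=
  (exists M : R, forall u : 'cV[R]_m, inU Hu cu u -> forall j, `|u j 0| <= M) /\
  (exists u0 : 'cV[R]_m, exists e : R, 0 < e /\
     forall u : 'cV[R]_m, (forall j, `|u j 0 - u0 j 0| < e) -> inU Hu cu u).

Definition stabilisable {R : realType} {n m : nat}
  (A : 'M[R]_n) (B : 'M[R]_(n, m)) : Prop :=
  exists K : 'M[R]_(m, n), forall (x : 'cV[R]_n) (i : 'I_n),
    (fun k : nat => (iter k (mulmx (A + B *m K)) x) i 0) @ \oo --> (0 : R).

Record belief (R : realType) (n : nat) := Belief {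
  bmean : 'cV[R]_n ;
  bcov  : 'M[R]_n
}.
Arguments Belief {R n}.
Arguments bmean {R n}.
Arguments bcov {R n}.

(* one step of the maximum-likelihood-observation belief dynamics;
   the (possibly state dependent) noise covariance V_k is V (\hat x_k). *)
Definition mlo {R : realType} {n m q : nat}
  (A : 'M[R]_n) (B : 'M[R]_(n, m)) (C : 'M[R]_(q, n)) (W : 'M[R]_n)
  (V : 'cV[R]_n -> 'M[R]_q) (b : belief R n) (u : 'cV[R]_m) : belief R n :=
  let Sb := A *m bcov b *m A^T + W in
  let K := Sb *m C^T *m invmx (C *m Sb *m C^T + V (bmean b)) in
  Belief (A *m bmean b + B *m u) (Sb - K *m C *m Sb).

(* predicate pi given by tolerance eps and g(x) = c - a^T x *)
Record prtl_pred (R : realType) (n : nat) := PPred {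
  peps : R ;
  pa   : 'cV[R]_n ;
  pc   : R
}.
Arguments peps {R n}.
Arguments pa {R n}.
Arguments pc {R n}.

(* formulas in negation normal pform over atoms of type P *)
Inductive pform (P : Type) : Type :=
| FAtom of P
| FNAtom of P
| FAnd of pform P & pform P
| FOr of pform P & pform P
| FUntil of pform P & pform P
| FRelease of pform P & pform P.
Arguments FAtom {P}.
Arguments FNAtom {P}.
Arguments FAnd {P}.
Arguments FOr {P}.
Arguments FUntil {P}.
Arguments FRelease {P}.

Fixpoint sat {P : Type} (va vn : nat -> P -> Prop) (k : nat) (f : pform P)
  : Prop :=
  match f with
  | FAtom p => va k p
  | FNAtom p => vn k p
  | FAnd f1 f2 => sat va vn k f1 /\ sat va vn k f2
  | FOr f1 f2 => sat va vn k f1 \/ sat va vn k f2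
  | FUntil f1 f2 => exists k', (k <= k')%N /\ sat va vn k' f2 /\
      forall k'', (k <= k'' <= k')%N -> sat va vn k'' f1
  | FRelease f1 f2 =>
      (exists k', (k <= k')%N /\ sat va vn k' f1 /\
         forall k'', (k <= k'' <= k')%N -> sat va vn k'' f2)
      \/ (forall k', (k <= k')%N -> sat va vn k' f2)
  end.

(* bounded (no-loop) semantics on a finite path of positions 0..K, as used by
   bounded model checking for loop-free witnesses *)
Fixpoint sat_fin {P : Type} (va vn : nat -> P -> Prop) (K k : nat) (f : pform P)
  : Prop :=
  match f with
  | FAtom p => va k p
  | FNAtom p => vn k p
  | FAnd f1 f2 => sat_fin va vn K k f1 /\ sat_fin va vn K k f2
  | FOr f1 f2 => sat_fin va vn K k f1 \/ sat_fin va vn K k f2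
  | FUntil f1 f2 => exists k', (k <= k' <= K)%N /\ sat_fin va vn K k' f2 /\
      forall k'', (k <= k'' <= k')%N -> sat_fin va vn K k'' f1
  | FRelease f1 f2 => exists k', (k <= k' <= K)%N /\ sat_fin va vn K k' f1 /\
      forall k'', (k <= k'' <= k')%N -> sat_fin va vn K k'' f2
  end.

(* probability that a scalar Gaussian N(mu, v) lies in the set S
   (v = 0: the degenerate Dirac law at mu) *)
Definition gauss1_prob {R : realType} (mu v : R) (S : set R) : \bar R :=
  if 0 < v then normal_prob mu (Num.sqrt v) S else (\1_S mu)%:E.

(* For x ~ N(\hat x, Sigma), the scalar a^T x ~ N(a^T \hat x, a^T Sigma a). *)
Definition lin_mean {R : realType} {n : nat} (b : belief R n) (a : 'cV[R]_n) : R :=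
  (a^T *m bmean b) 0 0.
Definition lin_var {R : realType} {n : nat} (b : belief R n) (a : 'cV[R]_n) : R :=
  (a^T *m bcov b *m a) 0 0.

(* b |= pi   iff  P(g(x) >= 0) > 1 - eps,  i.e. P(a^T x <= c) > 1 - eps *)
Definition pred_sat {R : realType} {n : nat} (b : belief R n) (p : prtl_pred R n)
  : Prop :=
  ((1 - peps p)%:E < gauss1_prob (lin_mean b (pa p)) (lin_var b (pa p))
                        `]-oo, pc p])%E.

(* b |= ~pi  iff  P(-g(x) >= 0) > 1 - eps,  i.e. P(a^T x >= c) > 1 - eps *)
Definition npred_sat {R : realType} {n : nat} (b : belief R n) (p : prtl_pred R n)
  : Prop :=
  ((1 - peps p)%:E < gauss1_prob (lin_mean b (pa p)) (lin_var b (pa p))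
                        `[pc p, +oo[)%E.

Definition prtl_sat {R : realType} {n : nat} (rho : nat -> belief R n) (k : nat)
  (f : pform (prtl_pred R n)) : Prop :=
  sat (fun k p => pred_sat (rho k) p) (fun k p => npred_sat (rho k) p) k f.

Definition prtl_models {R : realType} {n : nat} (rho : nat -> belief R n)
  (f : pform (prtl_pred R n)) : Prop := prtl_sat rho 0 f.

Definition bsat {R : realType} {n : nat} (b : belief R n)
  (f : pform (prtl_pred R n)) : Prop := prtl_sat (fun _ => b) 0 f.

Fixpoint preds_of {P : Type} (f : pform P) : list P :=
  match f with
  | FAtom p | FNAtom p => p :: nil
  | FAnd f1 f2 | FOr f1 f2 | FUntil f1 f2 | FRelease f1 f2 =>
      preds_of f1 ++ preds_of f2
  end.

Fixpoint lits_of {P : Type} (f : pform P) : list (pform P) :=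
  match f with
  | FAtom p => FAtom p :: nil
  | FNAtom p => FNAtom p :: nil
  | FAnd f1 f2 | FOr f1 f2 | FUntil f1 f2 | FRelease f1 f2 =>
      lits_of f1 ++ lits_of f2
  end.

Fixpoint is_state {P : Type} (f : pform P) : bool :=
  match f with
  | FAtom _ | FNAtom _ => true
  | FAnd f1 f2 | FOr f1 f2 => is_state f1 && is_state f2
  | FUntil _ _ | FRelease _ _ => false
  end.

(* phi~ : phi with its (maximal) state subformulas replaced by atomic
   propositions (the atom is the replaced state subformula itself) *)
Fixpoint tilde {P : Type} (f : pform P) : pform (pform P) :=
  if is_state f then FAtom f else
  match f with
  | FAtom _ | FNAtom _ => FAtom f
  | FAnd f1 f2 => FAnd (tilde f1) (tilde f2)
  | FOr f1 f2 => FOr (tilde f1) (tilde f2)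
  | FUntil f1 f2 => FUntil (tilde f1) (tilde f2)
  | FRelease f1 f2 => FRelease (tilde f1) (tilde f2)
  end.

Definition state_subs {P : Type} (f : pform P) : list (pform P) :=
  preds_of (tilde f).

Record kripke (R : realType) (n : nat) := Kripke {
  kst : finType ;
  kinit : kst ;
  ktrans : rel kst ;
  kregion : kst -> set (belief R n) ;
  klabel : kst -> pform (prtl_pred R n) -> Prop
}.
Arguments kinit {R n}.
Arguments ktrans {R n}.
Arguments kregion {R n}.
Arguments klabel {R n}.

(* M is an abstraction of phi with initial belief b0, as described:
   - the initial state is the abstraction of b0;
   - each region is the set of beliefs satisfying a subset of the
     (possibly negated) predicates of phi;
   - each state is labelled by exactly the state subformulas of phi valid on
     the whole region.
   (Transitions are left arbitrary.) *)
Definition is_abstraction {R : realType} {n : nat} (M : kripke R n)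
  (phi : pform (prtl_pred R n)) (b0 : belief R n) : Prop :=
  kregion M (kinit M) b0 /\
  (forall s, exists ls : list (pform (prtl_pred R n)),
      (forall l, List.In l ls -> List.In l (lits_of phi)) /\
      kregion M s = [set b | forall l, List.In l ls -> bsat b l]) /\
  (forall s psi, klabel M s psi <->
      (List.In psi (state_subs phi) /\ forall b, kregion M s b -> bsat b psi)).

(* a discrete path  P_0 ... P_{L-1} (P_L ... P_K)^omega  (loop iff L <= K) *)
Record dpath (S : Type) := DPath { dK : nat ; dL : nat ; dps : nat -> S }.
Arguments DPath {S}.
Arguments dK {S}.
Arguments dL {S}.
Arguments dps {S}.

Definition same_dpath {S : Type} (p q : dpath S) : Prop :=
  dK p = dK q /\ dL p = dL q /\ forall i, (i <= dK p)%N -> dps p i = dps q i.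

Definition is_kpath {R : realType} {n : nat} (M : kripke R n)
  (P : dpath (kst M)) : Prop :=
  dps P 0 = kinit M /\
  (forall i, (i < dK P)%N -> ktrans M (dps P i) (dps P i.+1)) /\
  ((dL P <= dK P)%N -> ktrans M (dps P (dK P)) (dps P (dL P))).

Definition unfold_pos (K L j : nat) : nat :=
  if (j <= K)%N then j else (L + (j - L) %% (K - L).+1)%N.

(* the discrete path satisfies phi~ (bounded model checking semantics:
   lasso paths by their infinite unfolding, loop-free ones by the bounded
   semantics) *)
Definition dpath_sat {R : realType} {n : nat} (M : kripke R n)
  (P : dpath (kst M)) (phi : pform (prtl_pred R n)) : Prop :=
  if (dL P <= dK P)%N then
    sat (fun j psi => klabel M (dps P (unfold_pos (dK P) (dL P) j)) psi)
        (fun _ _ => False) 0 (tilde phi)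
  else
    sat_fin (fun j psi => klabel M (dps P j) psi) (fun _ _ => False)
            (dK P) 0 (tilde phi).

(* BMC finds P in M_phi x (complements of the excluded paths) *)
Definition bmc_finds {R : realType} {n : nat} (M : kripke R n)
  (phi : pform (prtl_pred R n)) (excl : list (dpath (kst M)))
  (P : dpath (kst M)) : Prop :=
  is_kpath P /\ (forall Q, List.In Q excl -> ~ same_dpath P Q) /\
  dpath_sat P phi.

(* successful outcome of fSearch on P: a belief path b_0..b_H with inputs
   u_0..u_{H-1}, following the MLO dynamics from b0, with b_k in the region
   P_{I(k)} for an index function I (I(0)=0, stepping by 0 or 1), and, in the
   lasso case (loop entry at time kL, with I(kL) = L entered first at kL), the
   loop-closing conditions  xhat_H = xhat_kL,  Sigma_H <= Sigma_kL. *)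
Definition fsearch_ok {R : realType} {n m q r : nat}
  (A : 'M[R]_n) (B : 'M[R]_(n, m)) (C : 'M[R]_(q, n)) (W : 'M[R]_n)
  (V : 'cV[R]_n -> 'M[R]_q) (Hu : 'M[R]_(r, m)) (cu : 'cV[R]_r)
  (M : kripke R n) (b0 : belief R n) (P : dpath (kst M))
  (H : nat) (loop : option nat)
  (bs : nat -> belief R n) (us : nat -> 'cV[R]_m) : Prop :=
  bs 0 = b0 /\
  (forall k, (k < H)%N -> inU Hu cu (us k) /\ bs k.+1 = mlo A B C W V (bs k) (us k)) /\
  exists I : nat -> nat, I 0 = 0%N /\
  match loop with
  | Some kL =>
      (dL P <= dK P)%N /\ (0 < H)%N /\ (kL < H)%N /\
      (forall k, (k.+1 < H)%N -> I k.+1 = I k \/ I k.+1 = (I k).+1) /\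
      (forall k, (k < H)%N -> kregion M (dps P (I k)) (bs k)) /\
      I H.-1 = dK P /\ I kL = dL P /\ (forall k, (k < kL)%N -> (I k < dL P)%N) /\
      bmean (bs H) = bmean (bs kL) /\ loewner_le (bcov (bs H)) (bcov (bs kL))
  | None =>
      (dK P < dL P)%N /\
      (forall k, (k < H)%N -> I k.+1 = I k \/ I k.+1 = (I k).+1) /\
      (forall k, (k <= H)%N -> kregion M (dps P (I k)) (bs k)) /\
      I H = dK P
  end.

Inductive outcome (R : realType) (n m : nat) :=
| IdFound of nat & option nat & (nat -> belief R n) & (nat -> 'cV[R]_m)
| IdInfeasible.
Arguments IdFound {R n m}.
Arguments IdInfeasible {R n m}.

(* possible runs of idPRTL (BMC and the sampling-based fSearch are treated
   nondeterministically; fSearch may fail on any path) *)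
Inductive idPRTL_run {R : realType} {n m q r : nat}
  (A : 'M[R]_n) (B : 'M[R]_(n, m)) (C : 'M[R]_(q, n)) (W : 'M[R]_n)
  (V : 'cV[R]_n -> 'M[R]_q) (Hu : 'M[R]_(r, m)) (cu : 'cV[R]_r)
  (M : kripke R n) (phi : pform (prtl_pred R n)) (b0 : belief R n)
  : list (dpath (kst M)) -> outcome R n m -> Prop :=
| run_found excl P H loop bs us :
    bmc_finds phi excl P ->
    fsearch_ok A B C W V Hu cu b0 P H loop bs us ->
    idPRTL_run A B C W V Hu cu phi b0 excl (IdFound H loop bs us)
| run_refine excl P o :
    bmc_finds phi excl P ->
    idPRTL_run A B C W V Hu cu phi b0 (P :: excl) o ->
    idPRTL_run A B C W V Hu cu phi b0 excl o
| run_infeasible excl :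
    (forall P, ~ bmc_finds phi excl P) ->
    idPRTL_run A B C W V Hu cu phi b0 excl IdInfeasible.

(* the (infinite) belief path described by the lasso b_0..b_{kL-1}(b_kL..b_{H-1})^omega *)
Definition lasso_path {R : realType} {n : nat} (H kL : nat)
  (bs : nat -> belief R n) (k : nat) : belief R n :=
  if (k < H)%N then bs k else bs (kL + (k - kL) %% (H - kL))%N.

(* rho_H |= phi : for a lasso, its infinite unfolding satisfies phi; for a
   loop-free path b_0..b_H, every infinite continuation satisfies phi *)
Definition found_path_models {R : realType} {n : nat} (H : nat)
  (loop : option nat) (bs : nat -> belief R n) (phi : pform (prtl_pred R n))
  : Prop :=
  match loop with
  | Some kL => prtl_models (lasso_path H kL bs) phi
  | None => forall rho : nat -> belief R n,
      (forall k, (k <= H)%N -> rho k = bs k) -> prtl_models rho phi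
  end.

(* Main.v *)
From Pilot Require Import Defs.
From HB Require Import structures.
From mathcomp Require Import all_boot all_order all_algebra.
From mathcomp Require Import all_classical all_reals all_analysis.
From mathcomp Require Import zify.
From Stdlib Require List.
Import Order.TTheory GRing.Theory Num.Theory.
Import Pilot.Defs.
Local Open Scope classical_set_scope.
Local Open Scope ring_scope.

Lemma state_local (R : realType) (n : nat) (f : pform (prtl_pred R n)) :
  is_state f -> forall (rho rho' : nat -> belief R n) j j',
  rho j = rho' j' -> prtl_sat rho j f -> prtl_sat rho' j' f.
Proof.
elim: f => [p|p|f1 IH1 f2 IH2|f1 IH1 f2 IH2|f1 IH1 f2 IH2|f1 IH1 f2 IH2] //=
  Hs rho rho' j j' E; rewrite /prtl_sat /=.
- by rewrite E.
- by rewrite E.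
- move/andP: Hs => [H1 H2] [A1 A2]; split.
  + exact: (IH1 H1 rho rho' j j' E).
  + exact: (IH2 H2 rho rho' j j' E).
- move/andP: Hs => [H1 H2] [A1|A2].
  + left; exact: (IH1 H1 rho rho' j j' E).
  + right; exact: (IH2 H2 rho rho' j j' E).
Qed.

Lemma gmono (g : nat -> nat) (gstep : forall j, g j.+1 = g j \/ g j.+1 = (g j).+1) j k : (j <= k)%N -> (g j <= g k)%N.
Proof.
move=> /subnK <-; elim: (k - j)%N => [|d IH] //=.
rewrite addSn; case: (gstep (d + j)%N) => ->; lia.
Qed.

Lemma g_ivt (g : nat -> nat) (gstep : forall j, g j.+1 = g j \/ g j.+1 = (g j).+1) N j j' : (j <= j')%N -> (g j <= N <= g j')%N ->
  exists k, (j <= k <= j')%N /\ g k = N.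
Proof.
elim: j' => [|j' IH] Hj HN.
  move: HN; have -> : j = 0%N by lia.
  by move=> HN; exists 0%N; split; lia.
case Ej: (j == j'.+1); first by move/eqP: Ej => Ej; subst j; exists j'.+1; split; lia.
have Hj' : (j <= j')%N.
  by rewrite leq_eqVlt Ej /= in Hj.
case: (leqP N (g j')) => HN'.
  have [k [Hk Ek]] := IH Hj' ltac:(lia).
  by exists k; split; [lia|].
exists j'.+1; split; first lia.
case: (gstep j') => E; lia.
Qed.

Lemma g_reach (g : nat -> nat) :
  (forall j, g j.+1 = g j \/ g j.+1 = (g j).+1) ->
  (forall j, exists j', (j <= j')%N /\ (g j < g j')%N) ->
  forall j N, (g j <= N)%N -> exists j', (j <= j')%N /\ g j' = N.
Proof.
move=> gs gu j N HN.
have [j1 [Hj1 HN1]] : exists j1, (j <= j1)%N /\ (N <= g j1)%N.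
  elim: N HN => [|N IH] HN; first by exists j; split.
  case: (leqP (g j) N) => HgN.
    have [j1 [Hj1 HN1]] := IH HgN.
    have [j2 [Hj2 HN2]] := gu j1.
    by exists j2; split; lia.
  by exists j; split; lia.
have [k [Hk Ek]] := @g_ivt g gs N j j1 Hj1 ltac:(lia).
by exists k; split; [lia|].
Qed.

Lemma stutter_inf (R : realType) (n : nat) (rho : nat -> belief R n)
  (lab : nat -> pform (prtl_pred R n) -> Prop) (g : nat -> nat) :
  (forall j, g j.+1 = g j \/ g j.+1 = (g j).+1) ->
  (forall j, exists j', (j <= j')%N /\ (g j < g j')%N) ->
  (forall j f, is_state f -> lab (g j) f -> prtl_sat rho j f) ->
  forall f j, sat lab (fun _ _ => False) (g j) (tilde f) -> prtl_sat rho j f.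
Proof.
move=> gs gu hat.
have reach := @g_reach g gs gu.
elim=> [p|p|f1 IH1 f2 IH2|f1 IH1 f2 IH2|f1 IH1 f2 IH2|f1 IH1 f2 IH2] j /=.
- by apply: hat.
- by apply: hat.
- case Hs: (is_state f1 && is_state f2) => /=.
    by move=> Hl; apply: hat => //=.
  by move=> [A1 A2]; split; [apply: IH1|apply: IH2].
- case Hs: (is_state f1 && is_state f2) => /=.
    by move=> Hl; apply: hat => //=.
  by move=> [A1|A2]; [left; apply: IH1|right; apply: IH2].
- move=> [k' [Hk' [S2 S1]]].
  have [j' [Hj' Ej']] := reach j k' Hk'.
  exists j'; split => //; split; first by apply: IH2; rewrite Ej'.
  move=> k'' /andP [Hk1 Hk2]; apply: IH1; apply: S1.
  have := @gmono g gs _ _ Hk1; have := @gmono g gs _ _ Hk2; lia.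
- move=> [[k' [Hk' [S1 S2]]]|S2].
    have [j' [Hj' Ej']] := reach j k' Hk'.
    left; exists j'; split => //; split; first by apply: IH1; rewrite Ej'.
    move=> k'' /andP [Hk1 Hk2]; apply: IH2; apply: S2.
    have := @gmono g gs _ _ Hk1; have := @gmono g gs _ _ Hk2; lia.
  right => k' Hk'; apply: IH2; apply: S2; exact: (@gmono g gs _ _ Hk').
Qed.

Lemma stutter_fin (R : realType) (n : nat) (rho : nat -> belief R n)
  (lab : nat -> pform (prtl_pred R n) -> Prop) (g : nat -> nat) (H K : nat) :
  (forall j, (j < H)%N -> g j.+1 = g j \/ g j.+1 = (g j).+1) ->
  g H = K ->
  (forall j f, (j <= H)%N -> is_state f -> lab (g j) f -> prtl_sat rho j f) ->
  forall f j, (j <= H)%N ->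
    sat_fin lab (fun _ _ => False) K (g j) (tilde f) -> prtl_sat rho j f.
Proof.
move=> gs0 gH hat.
pose g' j := g (minn j H).
have gs : forall j, g' j.+1 = g' j \/ g' j.+1 = (g' j).+1.
  move=> j; rewrite /g'; case: (ltnP j H) => Hj.
    have e1 : minn j.+1 H = j.+1 by apply/minn_idPl.
    have e2 : minn j H = j by apply/minn_idPl; lia.
    by rewrite e1 ?e2; apply: gs0.
  have e1 : minn j.+1 H = H by apply/minn_idPr; lia.
  have e2 : minn j H = H by apply/minn_idPr.
  by rewrite e1 ?e2; left.
have g'E : forall j, (j <= H)%N -> g' j = g j by move=> j Hj; rewrite /g' (minn_idPl Hj).
have reach : forall j k', (j <= H)%N -> (g j <= k' <= K)%N ->
    exists j', (j <= j' <= H)%N /\ g j' = k'.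
  move=> j k' Hj Hk.
  have [k [Hk1 Ek]] := @g_ivt g' gs k' j H Hj ltac:(rewrite !g'E //; lia).
  by exists k; split => //; rewrite -g'E //; lia.
have mono : forall j k, (j <= k <= H)%N -> (g j <= g k)%N.
  by move=> j k Hjk; rewrite -!g'E; [apply: (@gmono g' gs); lia|lia|lia].
elim=> [p|p|f1 IH1 f2 IH2|f1 IH1 f2 IH2|f1 IH1 f2 IH2|f1 IH1 f2 IH2] j Hj /=.
- by apply: hat.
- by apply: hat.
- case Hs: (is_state f1 && is_state f2) => /=.
    by move=> Hl; apply: hat => //=.
  by move=> [A1 A2]; split; [apply: IH1|apply: IH2].
- case Hs: (is_state f1 && is_state f2) => /=.
    by move=> Hl; apply: hat => //=.
  by move=> [A1|A2]; [left; apply: IH1|right; apply: IH2].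
- move=> [k' [Hk' [S2 S1]]].
  have [j' [Hj' Ej']] := reach j k' Hj Hk'.
  exists j'; split; first lia; split; first by apply: IH2; [lia|rewrite Ej'].
  move=> k'' Hk''; apply: IH1; first lia; apply: S1.
  have := mono j k'' ltac:(lia); have := mono k'' j' ltac:(lia); lia.
- move=> [k' [Hk' [S1 S2]]].
  have [j' [Hj' Ej']] := reach j k' Hj Hk'.
  left; exists j'; split; first lia; split; first by apply: IH1; [lia|rewrite Ej'].
  move=> k'' Hk''; apply: IH2; first lia; apply: S2.
  have := mono j k'' ltac:(lia); have := mono k'' j' ltac:(lia); lia.
Qed.

Local Open Scope nat_scope.
Definition tt_ (H kL j : nat) : nat :=
  if j < H then j else kL + (j - kL) %% (H - kL).

Fixpoint wr (H kL j : nat) : nat :=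
  match j with 0 => 0 | j'.+1 => wr H kL j' + (tt_ H kL j' + 1 == H) end.

Lemma modS_cases a p : 0 < p ->
  a.+1 %% p = if a %% p + 1 == p then 0 else a %% p + 1.
Proof.
move=> p0; rewrite -addn1 -modnDml.
case: eqP => E; first by rewrite E modnn.
apply: modn_small; have := ltn_pmod a p0; lia.
Qed.

Lemma tt_lt H kL j : kL < H -> tt_ H kL j < H.
Proof.
move=> hk; rewrite /tt_; case: ifP => // _.
have := @ltn_pmod (j - kL) (H - kL) ltac:(lia); lia.
Qed.

Lemma tt_succ H kL j : kL < H ->
  tt_ H kL j.+1 = if tt_ H kL j + 1 == H then kL else tt_ H kL j + 1.
Proof.
move=> hk; rewrite /tt_.
case: (ltnP j.+1 H) => h1.
  case: (ltnP j H) => h2; last lia.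
  case: eqP => E; lia.
case: (ltnP j H) => h2.
  have E : j.+1 = H by lia.
  rewrite -E subSn; last lia.
  rewrite modnn addn0 (_ : j + 1 = j.+1); last lia.
  by rewrite eqxx.
have -> : j.+1 - kL = (j - kL).+1 by lia.
rewrite (@modS_cases _ (H - kL)); last lia.
have := @ltn_pmod (j - kL) (H - kL) ltac:(lia).
case: eqP => E; case: eqP => E'; lia.
Qed.

Lemma wr_pos H kL j : kL < H -> 0 < wr H kL j -> kL <= tt_ H kL j.
Proof.
move=> hk; elim: j => [|j IH] //= Hw.
rewrite tt_succ //.
case: eqP => E //=.
move: Hw; rewrite (introF eqP E) addn0 => Hw.
have := IH Hw; lia.
Qed.

Lemma tt_adv H kL j i : kL < H -> tt_ H kL j + i < H ->
  tt_ H kL (j + i) = tt_ H kL j + i /\ wr H kL (j + i) = wr H kL j.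
Proof.
move=> hk; elim: i => [|i IH] Hi; first by rewrite !addn0.
have [E1 E2] := IH ltac:(lia).
rewrite addnS /= tt_succ // E1 E2.
have -> : (tt_ H kL j + i + 1 == H) = false by apply/eqP; lia.
split; lia.
Qed.

Lemma Imono (I : nat -> nat) H :
  (forall k, k.+1 < H -> I k.+1 = I k \/ I k.+1 = (I k).+1) ->
  forall k d, k + d < H -> I k <= I (k + d).
Proof.
move=> Is k; elim=> [|d IH] Hd; first by rewrite addn0.
rewrite addnS; case: (Is (k + d) ltac:(lia)) => ->; have := IH ltac:(lia); lia.
Qed.

Definition GG (I : nat -> nat) (H kL K L j : nat) : nat :=
  I (tt_ H kL j) + wr H kL j * (K - L).+1.


Lemma G_facts (I : nat -> nat) (H kL K L : nat) :
  kL < H -> L <= K ->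
  (forall k, k.+1 < H -> I k.+1 = I k \/ I k.+1 = (I k).+1) ->
  I H.-1 = K -> I kL = L -> I 0 = 0 ->
  [/\ GG I H kL K L 0 = 0,
      forall j, GG I H kL K L j.+1 = GG I H kL K L j \/
                GG I H kL K L j.+1 = (GG I H kL K L j).+1,
      forall j, unfold_pos K L (GG I H kL K L j) = I (tt_ H kL j) &
      forall j, exists j', j <= j' /\ GG I H kL K L j < GG I H kL K L j'].
Proof.
move=> hk hLK Is IHK IkL I0.
have IleK : forall k, k < H -> I k <= K.
  move=> k hk'; have := @Imono I H Is k (H.-1 - k) ltac:(lia).
  by rewrite (_ : k + (H.-1 - k) = H.-1); [rewrite IHK|lia].
have LleI : forall k, kL <= k < H -> L <= I k.
  move=> k hk'; have := @Imono I H Is kL (k - kL) ltac:(lia).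
  by rewrite (_ : kL + (k - kL) = k); [rewrite IkL|lia].
split.
- by rewrite /GG /tt_ ifT ?I0 //; lia.
- move=> j; rewrite /GG tt_succ //=.
  have tl := @tt_lt H kL j hk.
  case: eqP => E.
    right; rewrite IkL mulnDl mul1n.
    have -> : tt_ H kL j = H.-1 by lia.
    rewrite IHK; lia.
  rewrite addn0 addn1; case: (Is (tt_ H kL j) ltac:(lia)) => ->; lia.
- move=> j; rewrite /GG /unfold_pos.
  have tl := @tt_lt H kL j hk.
  have := IleK _ tl.
  case: (posnP (wr H kL j)) => hw.
    by rewrite hw mul0n addn0 => ->.
  have := @wr_pos H kL j hk hw => hkt.
  have := LleI (tt_ H kL j) ltac:(lia).
  set x := I (tt_ H kL j); set w := wr H kL j => hL hK.
  have Kp : K < w * (K - L).+1 + L.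
    have : (K - L).+1 <= w * (K - L).+1 by rewrite leq_pmull.
    lia.
  rewrite ifF; last lia.
  rewrite (_ : x + w * (K - L).+1 - L = w * (K - L).+1 + (x - L)); last lia.
  rewrite modnMDl modn_small; lia.
- move=> j.
  have tl := @tt_lt H kL j hk.
  have [E1 E2] := @tt_adv H kL j (H.-1 - tt_ H kL j) hk ltac:(lia).
  exists (j + (H.-1 - tt_ H kL j)).+1; split; first lia.
  rewrite /GG tt_succ //= E1 E2.
  have -> : (tt_ H kL j + (H.-1 - tt_ H kL j) + 1 == H) by apply/eqP; lia.
  rewrite IkL mulnDl mul1n.
  have := IleK _ tl; lia.
Qed.

Local Open Scope ring_scope.

Theorem theorem3 (R : realType) (n m q r : nat)
  (A : 'M[R]_n) (B : 'M[R]_(n, m)) (C : 'M[R]_(q, n)) (W : 'M[R]_n)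
  (V : 'cV[R]_n -> 'M[R]_q) (Hu : 'M[R]_(r, m)) (cu : 'cV[R]_r)
  (phi : pform (prtl_pred R n)) (xinit : 'cV[R]_n) (Sinit : 'M[R]_n)
  (M : kripke R n)
  (H : nat) (loop : option nat) (bs : nat -> belief R n) (us : nat -> 'cV[R]_m) :
  stabilisable A B ->
  psd W ->
  (forall x, psd (V x)) ->
  full_dim_polytope Hu cu ->
  psd Sinit ->
  (forall p, List.In p (preds_of phi) -> 0 <= peps p <= 1) ->
  is_abstraction M phi (Belief xinit Sinit) ->
  @idPRTL_run R n m q r A B C W V Hu cu M phi (Belief xinit Sinit) nil (IdFound H loop bs us) ->
  found_path_models H loop bs phi.
Proof.
move=> _ _ _ _ _ _ [_ [_ Hlab]] Hrun.
have lab_ok : forall s f b, klabel M s f -> kregion M s b -> bsat b f.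
  by move=> s f b Hl Hr; have [_ Hall] := (Hlab s f).1 Hl; exact: Hall.
have key : forall excl o,
    @idPRTL_run R n m q r A B C W V Hu cu M phi (Belief xinit Sinit) excl o ->
    o = IdFound H loop bs us -> found_path_models H loop bs phi.
  clear Hrun; move=> excl o; elim => [excl' P H' loop' bs' us' Hb Hf | excl' P o' _ _ IH | excl' _] //.
  case=> E1 E2 E3 E4; subst H' loop' bs' us'.
  move: Hb => [_ [_ Hsat]].
  move: Hf => [Hb0 [Hdyn [I [I0 Hm]]]].
  case: loop Hm => [kL|] Hm.
  - move: Hm => [hLK [hH [hk [Is [Reg [IHK [IkL _]]]]]]].
    rewrite /dpath_sat hLK in Hsat.
    have [G0 Gs Gu Gunb] := @G_facts I H kL (dK P) (dL P) hk hLK Is IHK IkL I0.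
    rewrite /found_path_models /prtl_models.
    apply: (@stutter_inf R n (lasso_path H kL bs)
      (fun j psi => klabel M (dps P (unfold_pos (dK P) (dL P) j)) psi)
      (GG I H kL (dK P) (dL P)) Gs Gunb _ phi 0%N).
    + move=> j f Hs; rewrite /= Gu => Hl.
      have tl := @tt_lt H kL j hk.
      have Hb := lab_ok _ _ _ Hl (Reg _ tl).
      apply: (@state_local R n f Hs (fun _ => bs (tt_ H kL j)) _ 0%N j) Hb.
      by rewrite /lasso_path /tt_; case: ifP.
    + by rewrite G0.
  - move: Hm => [hKL [Is [Reg IHK]]].
    have hLK : (dL P <= dK P)%N = false by apply/negbTE; rewrite -ltnNge.
    rewrite /dpath_sat hLK -I0 in Hsat.
    move=> rho Hrho; rewrite /prtl_models.
    apply: (@stutter_fin R n rho (fun j psi => klabel M (dps P j) psi) I H (dK P)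
      Is IHK _ phi 0%N) => //.
    move=> j f Hj Hs Hl.
    have Hb := lab_ok _ _ _ Hl (Reg _ Hj).
    apply: (@state_local R n f Hs (fun _ => bs j) _ 0%N j) Hb.
    by rewrite Hrho.
exact: key Hrun erefl.
Qed.
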